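(* Let $\mathcal{C}$ be a category with a faithful functor $Q:\mathcal{C}\to\mathbf{Set}$ satisfying conditions (1Q) and (2Q) below for an object $A_0$ and an element $x_0\in Q(A_0)$. Then: 1. If $\mu:A\to B$ is a morphism such that $Q(\mu):Q(A)\to Q(B)$ is surjective, then $\mu$ is an epimorphism. 2. A morphism $\mu:A\to B$ is a monomorphism if and only if $Q(\mu)$ is injective. 3. If $\Phi$ is an automorphism of $\mathcal{C}$, then there exists an epimorphism $\eta:A_0\to\Phi(A_0)$; and if such an epimorphism $\eta$ is an isomorphism, then $\Phi$ is potentially inner.
   Context: (1Q): for every object $A$ of $\mathcal{C}$ and every $a\in Q(A)$ there is exactly one morphism $\alpha:A_0\to A$ with $Q(\alpha)(x_0)=a$. (2Q): for every object $A$ of $\mathcal{C}$ there is a morphism $\alpha:A\to A_0$ such that $Q(\alpha):Q(A)\to Q(A_0)$ is surjective. An automorphism $\Phi$ of $\mathcal{C}$ is called potentially inner if there is a family of bijections $s_A:Q(A)\to Q(\Phi(A))$, $A\in\mathrm{Ob}\,\mathcal{C}$, such that $Q(\Phi(\mu))\circ s_A=s_B\circ Q(\mu)$ for every morphism $\mu:A\to B$. *)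

(* Defs.v *)
Set Implicit Arguments.
Unset Strict Implicit.

Record Category := {
  Obj :> Type;
  Hom : Obj -> Obj -> Type;
  comp : forall {A B C : Obj}, Hom B C -> Hom A B -> Hom A C;
  idm : forall A : Obj, Hom A A;
  comp_assoc : forall (A B C D : Obj) (f : Hom A B) (g : Hom B C) (h : Hom C D),
      comp h (comp g f) = comp (comp h g) f;
  comp_id_l : forall (A B : Obj) (f : Hom A B), comp (idm B) f = f;
  comp_id_r : forall (A B : Obj) (f : Hom A B), comp f (idm A) = f
}.

Arguments Hom {c} _ _.
Arguments comp {c A B C} _ _.
Arguments idm {c} _.

Record SetFunctor (C : Category) := {
  Qob :> C -> Type;
  Qmor : forall {A B : C}, Hom A B -> Qob A -> Qob B;
  Qmor_id : forall (A : C) (x : Qob A), Qmor (idm A) x = x;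
  Qmor_comp : forall (A B D : C) (f : Hom A B) (g : Hom B D) (x : Qob A),
      Qmor (comp g f) x = Qmor g (Qmor f x)
}.
Arguments Qmor {C} s {A B} _ _.

Record EndoFunctor (C : Category) := {
  Fob :> C -> C;
  Fmor : forall {A B : C}, Hom A B -> Hom (Fob A) (Fob B);
  Fmor_id : forall A : C, Fmor (idm A) = idm (Fob A);
  Fmor_comp : forall (A B D : C) (f : Hom A B) (g : Hom B D),
      Fmor (comp g f) = comp (Fmor g) (Fmor f)
}.
Arguments Fmor {C} e {A B} _.

Definition injectiveF {X Y : Type} (f : X -> Y) := forall x y, f x = f y -> x = y.
Definition surjectiveF {X Y : Type} (f : X -> Y) := forall y, exists x, f x = y.
Definition bijectiveF {X Y : Type} (f : X -> Y) := injectiveF f /\ surjectiveF f.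

Definition faithful (C : Category) (Q : SetFunctor C) : Prop :=
  forall (A B : C) (f g : Hom A B), (forall x, Qmor Q f x = Qmor Q g x) -> f = g.

Definition is_mono (C : Category) (A B : C) (mu : Hom A B) : Prop :=
  forall (D : C) (f g : Hom D A), comp mu f = comp mu g -> f = g.

Definition is_epi (C : Category) (A B : C) (mu : Hom A B) : Prop :=
  forall (D : C) (f g : Hom B D), comp f mu = comp g mu -> f = g.

Definition is_iso (C : Category) (A B : C) (mu : Hom A B) : Prop :=
  exists nu : Hom B A, comp nu mu = idm A /\ comp mu nu = idm B.

Definition is_automorphism (C : Category) (Phi : EndoFunctor C) : Prop :=
  bijectiveF (Fob Phi) /\
  forall A B : C, bijectiveF (fun f : Hom A B => Fmor Phi f).

Definition cond1Q (C : Category) (Q : SetFunctor C) (A0 : C) (x0 : Q A0) : Prop :=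
  forall (A : C) (a : Q A),
    exists alpha : Hom A0 A, Qmor Q alpha x0 = a /\
      forall beta : Hom A0 A, Qmor Q beta x0 = a -> beta = alpha.

Definition cond2Q (C : Category) (Q : SetFunctor C) (A0 : C) : Prop :=
  forall A : C, exists alpha : Hom A A0, surjectiveF (Qmor Q alpha).

Definition potentially_inner (C : Category) (Q : SetFunctor C) (Phi : EndoFunctor C) : Prop :=
  exists s : forall A : C, Q A -> Q (Phi A),
    (forall A : C, bijectiveF (s A)) /\
    forall (A B : C) (mu : Hom A B) (x : Q A),
      Qmor Q (Fmor Phi mu) (s A x) = s B (Qmor Q mu x).
Arguments cond1Q {C} Q A0 x0.
Arguments cond2Q {C} Q A0.
Arguments faithful {C} Q.
Arguments potentially_inner {C} Q Phi.
Arguments is_automorphism {C} Phi.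
Arguments is_mono {C A B} mu.
Arguments is_epi {C A B} mu.
Arguments is_iso {C A B} mu.

(* Main.v *)
Require Import Defs.
From Stdlib Require Import ClassicalEpsilon.

Lemma epi_of_surj (C : Category) (Q : SetFunctor C) (HQ : faithful Q)
  (A B : C) (mu : Hom A B) : surjectiveF (Qmor Q mu) -> is_epi mu.
Proof.
  intros Hs D f g E. apply HQ. intros y. destruct (Hs y) as [x <-].
  rewrite <- !Qmor_comp. rewrite E. reflexivity.
Qed.

Lemma Phi_epi (C : Category) (Phi : EndoFunctor C) (HP : is_automorphism Phi)
  (A B : C) (mu : Hom A B) : is_epi mu -> is_epi (Fmor Phi mu).
Proof.
  intros He D f g E. destruct HP as [[_ Hob] Hh].
  destruct (Hob D) as [D' <-].
  destruct (proj2 (Hh _ _) f) as [f' <-].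
  destruct (proj2 (Hh _ _) g) as [g' <-].
  rewrite <- !Fmor_comp in E. apply (proj1 (Hh _ _)) in E.
  apply He in E. rewrite E. reflexivity.
Qed.

Theorem lemma2 (C : Category) (Q : SetFunctor C) (A0 : C) (x0 : Q A0)
  (HQ : faithful Q) (H1 : cond1Q Q A0 x0) (H2 : cond2Q Q A0) :
  (forall (A B : C) (mu : Hom A B), surjectiveF (Qmor Q mu) -> is_epi mu) /\
  (forall (A B : C) (mu : Hom A B), is_mono mu <-> injectiveF (Qmor Q mu)) /\
  (forall Phi : EndoFunctor C, is_automorphism Phi ->
     (exists eta : Hom A0 (Phi A0), is_epi eta) /\
     (forall eta : Hom A0 (Phi A0), is_epi eta -> is_iso eta ->
        potentially_inner Q Phi)).
Proof.
  set (al := fun (A : C) (a : Q A) =>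
         proj1_sig (constructive_indefinite_description _ (H1 A a))).
  assert (Hal1 : forall A a, Qmor Q (al A a) x0 = a).
  { intros A a. unfold al. exact (proj1 (proj2_sig (constructive_indefinite_description _ (H1 A a)))). }
  assert (Hal2 : forall A a (beta : Hom A0 A), Qmor Q beta x0 = a -> beta = al A a).
  { intros A a beta. unfold al. exact (proj2 (proj2_sig (constructive_indefinite_description _ (H1 A a))) beta). }
  clearbody al.
  split; [|split].
  - intros A B mu; exact (@epi_of_surj C Q HQ A B mu).
  - intros A B mu. split.
    + intros Hm a b E.
      assert (E' : comp mu (al A a) = comp mu (al A b)).
      { rewrite (Hal2 B (Qmor Q mu a) (comp mu (al A a))).
        - symmetry. apply Hal2. rewrite Qmor_comp, Hal1. symmetry; exact E.
        - rewrite Qmor_comp, Hal1. reflexivity. }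
      apply Hm in E'. rewrite <- (Hal1 A a), <- (Hal1 A b), E'. reflexivity.
    + intros Hi D f g E. apply HQ. intros x. apply Hi.
      rewrite <- !Qmor_comp, E. reflexivity.
  - intros Phi HP. split.
    + pose proof HP as [[_ Hob] Hh].
      destruct (Hob A0) as [B HB].
      destruct (H2 B) as [alpha Hs].
      assert (Hep := @Phi_epi C Phi HP _ _ _ (@epi_of_surj C Q HQ _ _ _ Hs)).
      assert (G : forall X, Phi B = X -> exists eta : Hom X (Phi A0), is_epi eta).
      { intros X e. subst X. exists (Fmor Phi alpha). exact Hep. }
      apply G. exact HB.
    + intros eta Hepi [nu [Hn1 Hn2]].
      destruct HP as [[_ Hob] Hh].
      set (y0 := Qmor Q eta x0).
      exists (fun A a => Qmor Q (Fmor Phi (al A a)) y0).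
      split.
      * intros A. split.
        -- intros a b E. unfold y0 in E. rewrite <- !Qmor_comp in E.
           assert (E' : comp (Fmor Phi (al A a)) eta = comp (Fmor Phi (al A b)) eta).
           { rewrite (Hal2 _ _ _ E). symmetry. apply Hal2. reflexivity. }
           apply Hepi in E'. apply (proj1 (Hh _ _)) in E'.
           rewrite <- (Hal1 A a), <- (Hal1 A b), E'. reflexivity.
        -- intros c.
           destruct (proj2 (Hh A0 A) (comp (al _ c) nu)) as [beta Hb].
           exists (Qmor Q beta x0).
           rewrite <- (Hal2 _ _ beta eq_refl). rewrite Hb. unfold y0.
           rewrite <- Qmor_comp, <- comp_assoc, Hn1, comp_id_r. apply Hal1.
      * intros A B mu x.
        rewrite <- Qmor_comp, <- Fmor_comp.
        rewrite <- (Hal2 B (Qmor Q mu x) (comp mu (al A x))). reflexivity.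
        rewrite Qmor_comp, Hal1. reflexivity.
Qed.
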